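(* Let $\Phi = \{\xi = (\tau_L,\delta_L,\tau_R,\delta_R) \in \mathbb{R}^4 : \tau_L > |\delta_L + 1|,\ \tau_R < -|\delta_R+1|\}$, $\alpha(\xi) = \tau_L\tau_R + (\delta_L - 1)(\delta_R - 1)$, and $$g(\xi) = \left(\tau_R^2 - 2\delta_R,\ \delta_R^2,\ \tau_L\tau_R - \delta_L - \delta_R,\ \delta_L\delta_R\right).$$ If $\xi \in \Phi$ and $\alpha(\xi) < 0$, then $g(\xi) \in \Phi$. *)

(* Defs.v *)
From Stdlib Require Import Reals.
Open Scope R_scope.

Definition R4 : Type := (R * R * R * R)%type.

Definition Phi (xi : R4) : Prop :=
  let '(tL, dL, tR, dR) := xi in
  tL > Rabs (dL + 1) /\ tR < - Rabs (dR + 1).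

Definition alpha (xi : R4) : R :=
  let '(tL, dL, tR, dR) := xi in
  tL * tR + (dL - 1) * (dR - 1).

Definition g (xi : R4) : R4 :=
  let '(tL, dL, tR, dR) := xi in
  (tR ^ 2 - 2 * dR, dR ^ 2, tL * tR - dL - dR, dL * dR).

(* Main.v *)
Require Import Defs.
From Stdlib Require Import Reals Lra Psatz.
Open Scope R_scope.

Theorem proposition4p3 (xi : R4) :
  Phi xi -> alpha xi < 0 -> Phi (g xi).
Proof.
  destruct xi as [[[a b] c] d]; simpl.
  intros [H1 H2] H3.
  pose proof (Rabs_pos (b+1)) as P1. pose proof (Rabs_pos (d+1)) as P2.
  assert (K0 : Rabs (b+1) * (-c) < a * (-c)) by (apply Rmult_lt_compat_r; lra).
  assert (K4 : Rabs (b+1) * Rabs (d+1) <= Rabs (b+1) * (-c)) by (apply Rmult_le_compat_l; lra).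
  assert (K : Rabs (b+1) * Rabs (d+1) < a * (-c)) by lra.
  rewrite <- Rabs_mult in K.
  pose proof (Rle_abs ((b+1)*(d+1))) as K1.
  pose proof (Rle_abs (-((b+1)*(d+1)))) as K2. rewrite Rabs_Ropp in K2.
  assert (K3 : (d+1)^2 < c^2).
  { pose proof (Rle_abs (d+1)). pose proof (Rle_abs (-(d+1))). rewrite Rabs_Ropp in H0. nra. }
  split.
  - rewrite Rabs_right by nra. nra.
  - unfold Rabs; destruct (Rcase_abs (b*d+1)); nra.
Qed.
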